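(* Let $n$ training samples carry labels in $\{1,\dots,K\}$ with indicator matrix $F\in\mathbb{R}^{K\times n}$, with $n_k=n/K$ samples in each class $k$. Let the basis $G_1,\dots,G_r$ ($r\le n$) be a subset of the training samples with $r_k=r/K$ basis vectors in each class $k$, and let $F_{G_i}$ be the class indicator of $G_i$. Let $W\in\mathbb{R}^{r\times n}$ be entrywise nonnegative with positive column sums, $S=\operatorname{diag}(\mathbf{1}^TW)$, $\tilde W=WS^{-1}$ of full row rank, $X^*=F\tilde W^T(\tilde W\tilde W^T)^{-1}$, $F\tilde W^T\ne0$, and spectral risk $\gamma=\|X^*\|_F^2\|\tilde W\|_F^2/\|X^*\tilde W\|_F^2$. If $W_{ij}=0$ whenever $F_{G_i}\neq F_j$, then $K\le\gamma\le r$.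
   Context: The columns of $F$ are standard basis vectors of $\mathbb{R}^K$: $F_j=e_k$ iff sample $j$ is in class $k$. $W_{ij}$ is the similarity between basis vector $G_i$ and training sample $j$. *)

(* Defs.v *)
From mathcomp Require Import all_boot all_order all_algebra.
Set Implicit Arguments. Unset Strict Implicit. Unset Printing Implicit Defensive.
Import Order.TTheory GRing.Theory Num.Theory.
Local Open Scope ring_scope.

Definition indicator_mx (R : nzRingType) (K n : nat) (lab : 'I_n -> 'I_K)
  : 'M[R]_(K, n) := \matrix_(k < K, j < n) (lab j == k)%:R.

Definition frob2 (R : nzRingType) (m p : nat) (A : 'M[R]_(m, p)) : R :=
  \sum_(i < m) \sum_(j < p) A i j ^+ 2.

Definition colsum_diag (R : nzRingType) (r n : nat) (W : 'M[R]_(r, n)) : 'M[R]_n :=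
  diag_mx (\row_(j < n) \sum_(i < r) W i j).

Definition Wtilde (R : fieldType) (r n : nat) (W : 'M[R]_(r, n)) : 'M[R]_(r, n) :=
  W *m invmx (colsum_diag W).

Definition Xstar (R : fieldType) (K r n : nat) (F : 'M[R]_(K, n)) (Wt : 'M[R]_(r, n))
  : 'M[R]_(K, r) := F *m Wt^T *m invmx (Wt *m Wt^T).

Definition spectral_risk (R : fieldType) (K r n : nat) (F : 'M[R]_(K, n))
  (W : 'M[R]_(r, n)) : R :=
  let Wt := Wtilde W in
  let X := Xstar F Wt in
  frob2 X * frob2 Wt / frob2 (X *m Wt).

(* Main.v *)
Require Import Defs.
From mathcomp Require Import all_boot all_order all_algebra.
From mathcomp Require Import ring lra.
Import Order.TTheory GRing.Theory Num.Theory.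
Local Open Scope ring_scope.

Lemma Wtilde_E (R : realFieldType) r n (W : 'M[R]_(r, n))
  (hWcol : forall j, 0 < \sum_(i < r) W i j) i j :
  Wtilde W i j = W i j / \sum_(i0 < r) W i0 j.
Proof.
set d := \row_(j < n) \sum_(i < r) W i j.
set e := \row_(j < n) (\sum_(i < r) W i j)^-1.
have de : diag_mx d *m diag_mx e = 1%:M.
  apply/matrixP => a b; rewrite mul_mx_diag !mxE.
  case: (eqVneq a b) => [->|nab]; last by rewrite mul0r.
  by rewrite mulr1n mulfV // gt_eqF.
have [ud _] := mulmx1_unit de.
rewrite /Wtilde; have -> : invmx (colsum_diag W) = diag_mx e.
  by rewrite /colsum_diag -[invmx _]mulmx1 -de mulmxA mulVmx // mul1mx.
by rewrite mul_mx_diag !mxE.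
Qed.

Lemma frob2_ind (R : realFieldType) K m (l : 'I_m -> 'I_K) :
  frob2 (indicator_mx R l) = m%:R.
Proof.
rewrite /frob2 exchange_big /= -[m in RHS]card_ord -sumr_const.
apply: eq_bigr => j _; rewrite (bigD1 (l j)) //= big1 ?addr0.
  by rewrite !mxE eqxx expr1n.
by move=> k /negPf nk; rewrite !mxE eq_sym nk expr0n.
Qed.

Lemma unit_AAt (R : realFieldType) r n (A : 'M[R]_(r, n)) :
  row_free A -> A *m A^T \in unitmx.
Proof.
move=> fA; rewrite -row_free_unit; apply: inj_row_free => v hv.
have hvA : v *m A = 0.
  have : (v *m A *m (v *m A)^T) 0 0 = 0.
    by rewrite trmx_mul mulmxA -(mulmxA v) hv mul0mx mxE.
  rewrite mxE => /eqP; rewrite psumr_eq0; last by move=> j _; rewrite !mxE; exact: mulr_ge0 _ _ || (rewrite -expr2; exact: sqr_ge0).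
  move=> /allP h; apply/matrixP => a b; rewrite ord1 mxE.
  have := h b (mem_index_enum _); rewrite !mxE -expr2 sqrf_eq0 => /eqP ->.
  by [].
by apply/eqP; rewrite -(mulmx_free_eq0 _ fA) hvA.
Qed.

Lemma sum_sq_expand (R : realFieldType) (I : finType) (P : pred I) (c : R) (x : I -> R) :
  \sum_(i | P i) (c * x i - 1) ^+ 2 =
  c ^+ 2 * \sum_(i | P i) x i ^+ 2 - 2 * c * \sum_(i | P i) x i + \sum_(i | P i) 1.
Proof.
rewrite !mulr_sumr -sumrB -big_split /=.
by apply: eq_bigr => i _; ring.
Qed.

Theorem corollary1 (R : realFieldType) (K n r : nat)
  (lab : 'I_n -> 'I_K)
  (hn : forall k : 'I_K, (#|[set j | lab j == k]| * K)%N = n)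
  (g : 'I_r -> 'I_n) (hg : injective g) (hrn : (r <= n)%N)
  (hr : forall k : 'I_K, (#|[set i | lab (g i) == k]| * K)%N = r)
  (W : 'M[R]_(r, n))
  (hW0 : forall i j, 0 <= W i j)
  (hWcol : forall j, 0 < \sum_(i < r) W i j)
  (hrank : \rank (Wtilde W) = r)
  (hFW : indicator_mx R lab *m (Wtilde W)^T != 0)
  (hsupp : forall i j, lab (g i) != lab j -> W i j = 0) :
  K%:R <= spectral_risk (indicator_mx R lab) W <= r%:R.
Proof.
have WtE := @Wtilde_E _ _ _ W hWcol.
have n0 : (0 < n)%N.
  rewrite lt0n; apply/negP => /eqP n0; apply: (negP hFW); subst n; apply/eqP/matrixP => a b.
  by rewrite !mxE big_ord0.
have sum1 : forall j, \sum_i Wtilde W i j = 1.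
  move=> j; under eq_bigr do rewrite WtE.
  by rewrite -mulr_suml divff // gt_eqF.
have out0 : forall i j, lab (g i) != lab j -> Wtilde W i j = 0.
  by move=> i j h; rewrite WtE hsupp // mul0r.
have Wt0 : forall i j, 0 <= Wtilde W i j.
  by move=> i j; rewrite WtE divr_ge0 // ltW.
set Wt := Wtilde W in WtE sum1 out0 Wt0 hrank hFW *.
set FG := indicator_mx R (fun i => lab (g i)).
have hF : indicator_mx R lab = FG *m Wt.
  apply/matrixP => k j; rewrite !mxE.
  rewrite (eq_bigr (fun i => (lab j == k)%:R * Wt i j)); last first.
    move=> i _; rewrite mxE; case: (eqVneq (lab (g i)) (lab j)) => [->|ne] //.
    by rewrite out0 // !mulr0.
  by rewrite -mulr_sumr sum1 mulr1.
have hu : Wt *m Wt^T \in unitmx by apply: unit_AAt; rewrite /row_free hrank.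
have hX : Xstar (indicator_mx R lab) Wt = FG.
  by rewrite /Xstar hF -(mulmxA FG Wt) mulmxK.
rewrite /spectral_risk /= hX -hF !frob2_ind.
have hT : frob2 Wt = \sum_j \sum_i Wt i j ^+ 2 by rewrite /frob2 exchange_big.
have hup : forall j, \sum_i Wt i j ^+ 2 <= 1.
  move=> j; rewrite -(sum1 j); apply: ler_sum => i _.
  rewrite expr2 ler_piMr //; rewrite -(sum1 j) (bigD1 i) //= lerDl.
  by apply: sumr_ge0.
have hlow : forall j, K%:R <= r%:R * \sum_i Wt i j ^+ 2.
  move=> j; set C := [set i | lab (g i) == lab j].
  have hc := hr (lab j); rewrite -/C in hc.
  have splitC : forall f : R -> R, f 0 = 0 ->
      \sum_i f (Wt i j) = \sum_(i in C) f (Wt i j).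
    move=> f f0; rewrite (bigID (fun i => i \in C)) /= [X in _ + X]big1 ?addr0 //.
    by move=> i; rewrite inE => /out0 ->.
  have s1 : \sum_(i in C) Wt i j = 1 by rewrite -(splitC id) ?sum1.
  have c0 : (0 < #|C|)%N.
    rewrite lt0n; apply/negP => /eqP /card0_eq c0.
    by move: s1; rewrite big_pred0 // => /eqP; rewrite eq_sym oner_eq0.
  rewrite (splitC (fun x => x ^+ 2)) ?expr0n //.
  set S := \sum_(i in C) _.
  have key : 1 <= #|C|%:R * S.
    have : 0 <= \sum_(i in C) (#|C|%:R * Wt i j - 1) ^+ 2 by apply: sumr_ge0 => i _; exact: sqr_ge0.
    rewrite sum_sq_expand s1 sumr_const -/S.
    have cp : 0 < (#|C|%:R : R) by rewrite ltr0n.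
    move=> h.
    have : 0 <= #|C|%:R * (#|C|%:R * S - 1).
      by move: h; rewrite mulr1 -mulr_natr; nra.
    by rewrite pmulr_rge0 // subr_ge0.
  rewrite -hc natrM mulrAC.
  have k0 : 0 <= (K%:R : R) by rewrite ler0n.
  by rewrite -[X in X <= _]mul1r ler_wpM2r.
have np : 0 < (n%:R : R) by rewrite ltr0n.
rewrite hT; apply/andP; split.
  rewrite ler_pdivlMr // mulr_sumr.
  rewrite -[n in X in X <= _]card_ord -sumr_const mulr_sumr.
  by apply: ler_sum => j _; rewrite mulr1.
rewrite ler_pdivrMr // ler_wpM2l ?ler0n //.
rewrite -[n in X in _ <= X]card_ord -sumr_const.
by apply: ler_sum => j _; apply: hup.
Qed.
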